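(* Let $k$ be a field, $V$ a $k$-vector space and $\varphi,\psi\in\mathrm{End}_k(V)$ finite potent endomorphisms such that $(1+\varphi)(1+\psi)=1$. Then $\langle\varphi,\psi\rangle:=\varphi\,k[\varphi,\psi]+\psi\,k[\varphi,\psi]$ is a finite potent subspace of $\mathrm{End}_k(V)$.
   Context: An endomorphism $\varphi$ of $V$ is finite potent if $\varphi^nV$ is finite dimensional for some $n$. $k[\varphi,\psi]$ is the $k$-subalgebra of $\mathrm{End}_k(V)$ generated by $\varphi,\psi$. A subspace $F\subseteq\mathrm{End}_k(V)$ is finite potent if there is $n$ such that for any $\varphi_1,\dots,\varphi_n\in F$ the space $\varphi_1\cdots\varphi_nV$ is finite dimensional. *)

(* Defs.v *)
(* A k-vector space V (possibly infinite dimensional) is an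
   lmodType over a fieldType k; endomorphisms are k-linear maps V -> V,
   represented as functions together with linearity hypotheses. *)
From mathcomp Require Import all_boot all_order all_algebra.
Set Implicit Arguments. Unset Strict Implicit. Unset Printing Implicit Defensive.
Import GRing.Theory.
Local Open Scope ring_scope.

Definition findim_image (k : fieldType) (V : lmodType k) (f : V -> V) : Prop :=
  exists s : seq V, forall v : V,
    exists c : 'I_(size s) -> k, f v = \sum_(i < size s) c i *: s`_i.

Definition finite_potent (k : fieldType) (V : lmodType k) (phi : V -> V) : Prop :=
  exists n : nat, findim_image (iter n phi).

Inductive kalg (k : fieldType) (V : lmodType k) (phi psi : V -> V) : (V -> V) -> Prop :=
| kalg_id : kalg phi psi id
| kalg_phi : kalg phi psi phi
| kalg_psi : kalg phi psi psi
| kalg_add f g : kalg phi psi f -> kalg phi psi g -> kalg phi psi (fun v => f v + g v)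
| kalg_scale (a : k) f : kalg phi psi f -> kalg phi psi (fun v => a *: f v)
| kalg_comp f g : kalg phi psi f -> kalg phi psi g -> kalg phi psi (f \o g).

Definition gen_ideal (k : fieldType) (V : lmodType k) (phi psi : V -> V) (h : V -> V) : Prop :=
  exists a b : V -> V, kalg phi psi a /\ kalg phi psi b /\
    h = (fun v => phi (a v) + psi (b v)).

Definition finite_potent_subspace (k : fieldType) (V : lmodType k)
  (F : (V -> V) -> Prop) : Prop :=
  exists n : nat, forall fs : 'I_n -> (V -> V),
    (forall i, F (fs i)) ->
    findim_image (foldr (fun f g => f \o g) id [seq fs i | i <- enum 'I_n]).

(* Main.v *)
Require Import Defs.
From mathcomp Require Import all_boot all_order all_algebra.
Import GRing.Theory.
Local Open Scope ring_scope.
Set Implicit Arguments. Unset Strict Implicit.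

Section Helpers.
Variables (k : fieldType) (V : lmodType k).

Section Lin.
Variables (f : V -> V) (lf : linear f).
Lemma lin0 : f 0 = 0.
Proof.
have H := lf 1 0 0; rewrite !scale1r addr0 in H.
apply: (addrI (f 0)); rewrite addr0; exact: esym H.
Qed.
Lemma linD u v : f (u + v) = f u + f v.
Proof. by have := lf 1 u v; rewrite !scale1r. Qed.
Lemma linZ a u : f (a *: u) = a *: f u.
Proof. by have := lf a u 0; rewrite addr0 lin0 addr0. Qed.
Lemma linN u : f (- u) = - f u.
Proof. by rewrite -scaleN1r linZ scaleN1r. Qed.
Lemma linB u v : f (u - v) = f u - f v.
Proof. by rewrite linD linN. Qed.
Lemma lin_sum n (F : 'I_n -> V) : f (\sum_(i < n) F i) = \sum_(i < n) f (F i).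
Proof. exact: (big_morph f linD lin0). Qed.
End Lin.

Lemma iter_lin (f : V -> V) (lf : linear f) n : linear (iter n f).
Proof.
elim: n => [|n IH] a u v //=.
by rewrite IH lf.
Qed.

Lemma dep (s : seq V) (w : 'I_(size s).+1 -> V)
  (c : 'I_(size s).+1 -> 'I_(size s) -> k)
  (hw : forall j, w j = \sum_(i < size s) c j i *: s`_i) :
  exists a : 'I_(size s).+1 -> k, (exists j, a j != 0) /\ \sum_j a j *: w j = 0.
Proof.
set m := size s in w c hw *.
pose M := \matrix_(j < m.+1, i < m) c j i.
have Hk : kermx M != 0.
  rewrite kermx_eq0 /row_free.
  have := rank_leq_col M.
  by case: eqP => // ->; rewrite ltnn.
have [i0 [j0 nz]] : exists i0 j0, kermx M i0 j0 != 0.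
  case: (pickP (fun p : 'I_m.+1 * 'I_m.+1 => kermx M p.1 p.2 != 0)) => [[i j] /= H|H].
    by exists i, j.
  case/eqP: Hk; apply/matrixP => i j.
  by have := H (i, j) => /= /negbFE/eqP ->; rewrite mxE.
exists (fun j => kermx M i0 j); split; first by exists j0.
have E i : \sum_j kermx M i0 j * c j i = 0.
  have := congr1 (fun A : 'M[k]_(m.+1, m) => A i0 i) (mulmx_ker M).
  rewrite mxE [X in _ = X]mxE => H; rewrite -[RHS]H.
  by apply: eq_bigr => j _; congr (_ * _); rewrite /M mxE.
apply: etrans.
  apply: eq_bigr => j _; rewrite hw scaler_sumr.
  apply: eq_bigr => i _; rewrite scalerA; reflexivity.
rewrite exchange_big /=; apply: big1 => i _.
by rewrite -scaler_suml E scale0r.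
Qed.

Lemma chain_indep (T : V -> V) (lT : linear T) (y : nat -> V)
  (hy0 : T (y 0%N) = 0) (hyS : forall j, T (y j.+1) = y j) (nz : y 0%N != 0) :
  forall J (a : 'I_J.+1 -> k), \sum_(i < J.+1) a i *: y i = 0 -> forall i, a i = 0.
Proof.
elim=> [|J IH] a Ha i.
  rewrite big_ord1 in Ha.
  move/eqP: Ha; rewrite scaler_eq0 (negbTE nz) orbF => /eqP.
  by rewrite (ord1 i).
rewrite big_ord_recl in Ha.
have Hl : forall i', a (lift ord0 i') = 0.
  apply: (IH (fun i' => a (lift ord0 i'))).
  have := congr1 T Ha.
  rewrite (linD lT) (linZ lT) hy0 scaler0 add0r (lin_sum lT) (lin0 lT).
  by under eq_bigr => i' _ do rewrite (linZ lT) lift0 hyS.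
rewrite big1 ?addr0 in Ha; last by move=> i' _; rewrite Hl scale0r.
move/eqP: Ha; rewrite scaler_eq0 (negbTE nz) orbF => /eqP H0.
by case: (unliftP ord0 i) => [j ->|->].
Qed.

Lemma iter_comm (f c : V -> V) (hc : forall v, c (f v) = f (c v)) n v :
  c (iter n f v) = iter n f (c v).
Proof. by elim: n => //= n IH; rewrite hc IH. Qed.

Lemma fold_form (phi : V -> V) n (fs : 'I_n -> V -> V)
  (hQ : forall i, exists c : V -> V, (forall v, c (phi v) = phi (c v)) /\
        forall v, fs i v = phi (c v)) (r : seq 'I_n) :
  exists g : V -> V, forall v,
    foldr (fun f g => f \o g) id [seq fs i | i <- r] v = iter (size r) phi (g v).
Proof.
elim: r => [|i r [g Hg]]; first by exists id.
have [c [Hc Hh]] := hQ i.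
exists (c \o g) => v /=.
by rewrite Hh Hg iter_comm.
Qed.

End Helpers.
Unset Implicit Arguments.

Theorem proposition3p6 (k : fieldType) (V : lmodType k) (phi psi : V -> V)
  (lin_phi : linear phi) (lin_psi : linear psi)
  (fp_phi : finite_potent phi) (fp_psi : finite_potent psi)
  (h1 : forall v : V, (v + psi v) + phi (v + psi v) = v) :
  finite_potent_subspace (gen_ideal phi psi).
Proof.
pose S := fun v => v + psi v.
pose T := fun v => v + phi v.
have lT : linear T.
  by move=> a u v; rewrite /T lin_phi scalerDr addrACA.
have lS : linear S.
  by move=> a u v; rewrite /S lin_psi scalerDr addrACA.
have TS w : T (S w) = w by exact: h1.
have psiE v : psi v = - phi (S v).
  apply/eqP; rewrite -addr_eq0; apply/eqP; apply: (addrI v).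
  by rewrite addr0 addrA; exact: h1 v.
have [n [s hs]] := fp_phi.
have Titer m w : T (iter m phi w) = iter m phi (T w).
  by rewrite /T (linD (iter_lin lin_phi m)) -iterSr iterS.
have kerT : forall x, T x = 0 -> x = 0.
  move=> x Tx; apply/eqP; apply/negP => /negP xnz.
  pose y j := iter n phi (iter j S x).
  have hy0 : T (y 0%N) = 0 by rewrite /y /= Titer Tx (lin0 (iter_lin lin_phi n)).
  have hyS j : T (y j.+1) = y j by rewrite /y Titer iterS TS.
  have phix : phi x = - x.
    by apply/eqP; rewrite -addr_eq0 addrC; apply/eqP.
  have y0E : y 0%N = (-1) ^+ n *: x.
    rewrite /y /=; elim: n {hs y hy0 hyS} => [|m IH]; first by rewrite scale1r.
    by rewrite iterS IH (linZ lin_phi) phix exprS scalerN -scaleNr mulN1r.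
  have nz : y 0%N != 0 by rewrite y0E scaler_eq0 signr_eq0.
  have [c Hc] := fin_all_exists (fun (j : 'I_(size s).+1) => hs (iter j S x)).
  have [a [[j0 aj0] Ha]] := dep (w := fun j : 'I_(size s).+1 => y j) Hc.
  by move: aj0; rewrite (chain_indep lT hy0 hyS nz Ha) eqxx.
have ST v : S (T v) = v.
  apply/eqP; rewrite -subr_eq0; apply/eqP; apply: kerT.
  by rewrite (linB lT) TS subrr.
have comm v : psi (phi v) = phi (psi v).
  have e1 := ST v; have e2 := TS v.
  rewrite /S /T (linD lin_psi) in e1; rewrite /S /T (linD lin_phi) in e2.
  apply: (addrI (v + phi v + psi v)).
  by rewrite -[in LHS]addrA e1 -{1}e2 !addrA (addrAC v (psi v)).
have kc : forall f, kalg phi psi f -> forall v, f (phi v) = phi (f v).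
  move=> f; elim => [v|v|v|f1 g1 _ IH1 _ IH2 v|a0 f1 _ IH v|f1 g1 _ IH1 _ IH2 v] //=.
  - by rewrite IH1 IH2 (linD lin_phi).
  - by rewrite IH (linZ lin_phi).
  - by rewrite IH2 IH1.
exists n => fs Hfs.
have hQ : forall i : 'I_n, exists c : V -> V, (forall v, c (phi v) = phi (c v)) /\ forall v, fs i v = phi (c v).
  move=> i; have [a [b [ka [kb ->]]]] := Hfs i.
  exists (fun v => a v - S (b v)); split.
    move=> v; rewrite /S (kc _ ka) (kc _ kb) comm.
    by rewrite (linB lin_phi) (linD lin_phi).
  by move=> v; rewrite psiE (linB lin_phi).
have [g Hg] := fold_form hQ (enum 'I_n).
rewrite size_enum_ord in Hg.
exists s => v; have [c Hc] := hs (g v).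
by exists c; rewrite Hg.
Qed.
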